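(* Let $a$ be a fixed positive integer. For any positive integers $k,n$ with $k\ge n$, $$S_t(N_{k,n})=\sum_{i=1}^n\binom{k-i}{k-n}t^{n-i}N_{k,i}.$$
   Context: $\mathfrak{h}_t=\mathbb{Q}[t]\langle x,y\rangle$, $z_k=x^{k-1}y$. For $k\ge n\ge1$, $N_{k,n}=\sum_{k_1+\cdots+k_n=k,\ k_i\ge1}z_{ak_1}\cdots z_{ak_n}$. $\sigma_t$ is the algebra automorphism of $\mathfrak{h}_t$ with $\sigma_t(x)=x,\sigma_t(y)=tx+y$, and $S_t$ is the $\mathbb{Q}[t]$-linear map with $S_t(1)=1$, $S_t(wa)=\sigma_t(w)a$ for words $w$ and letters $a\in\{x,y\}$. *)

(* Defs.v *)
From HB Require Import structures.
From mathcomp Require Import all_boot all_order all_algebra.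
Set Implicit Arguments. Unset Strict Implicit. Unset Printing Implicit Defensive.
Import GRing.Theory.
Local Open Scope ring_scope.

(* Letters: x is encoded as [false], y as [true]; words are seq bool. *)
Definition lx : bool := false.
Definition ly : bool := true.

(* An element of h_t = Q[t]<x,y> is represented by a finite formal sum
   of terms (coefficient in Q[t], word). *)
Definition ncpoly := seq ({poly rat} * seq bool).

Definition ncoef (p : ncpoly) (w : seq bool) : {poly rat} :=
  \sum_(m <- p | m.2 == w) m.1.

Definition nc_eq (p q : ncpoly) : Prop := forall w, ncoef p w = ncoef q w.

Definition nc_one : ncpoly := [:: (1, [::])].
Definition nc_word (w : seq bool) : ncpoly := [:: (1, w)].
Definition nc_add (p q : ncpoly) : ncpoly := p ++ q.
Definition nc_scale (c : {poly rat}) (p : ncpoly) : ncpoly :=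
  [seq (c * m.1, m.2) | m <- p].
Definition nc_mul (p q : ncpoly) : ncpoly :=
  [seq (m.1 * m'.1, m.2 ++ m'.2) | m <- p, m' <- q].
Definition nc_sum (ps : seq ncpoly) : ncpoly := flatten ps.

(* sigma_t: algebra automorphism with x |-> x, y |-> t x + y *)
Definition sigma_letter (b : bool) : ncpoly :=
  if b then [:: ('X, [:: lx]); (1, [:: ly])] else [:: (1, [:: lx])].
Definition sigma_word (w : seq bool) : ncpoly :=
  foldr (fun b acc => nc_mul (sigma_letter b) acc) nc_one w.
Definition sigma_t (p : ncpoly) : ncpoly :=
  nc_sum [seq nc_scale m.1 (sigma_word m.2) | m <- p].

(* S_t: Q[t]-linear, S_t(1) = 1, S_t(w a) = sigma_t(w) a *)
Definition S_word (w : seq bool) : ncpoly :=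
  match rev w with
  | [::] => nc_one
  | a :: r => nc_mul (sigma_word (rev r)) (nc_word [:: a])
  end.
Definition S_t (p : ncpoly) : ncpoly :=
  nc_sum [seq nc_scale m.1 (S_word m.2) | m <- p].

Definition zw (k : nat) : seq bool := rcons (nseq k.-1 lx) ly.

Fixpoint comps (k n : nat) : seq (seq nat) :=
  match n with
  | 0 => if k == 0%N then [:: [::]] else [::]
  | n'.+1 => flatten [seq [seq i :: c | c <- comps (k - i) n'] | i <- iota 1 k]
  end.

Definition Nkn (a k n : nat) : ncpoly :=
  [seq (1, flatten [seq zw (a * ki) | ki <- c]) | c <- comps k n].

(* Main.v *)
Require Import Defs.
From mathcomp Require Import all_boot all_order all_algebra.
From mathcomp Require Import ring zify.
Set Implicit Arguments. Unset Strict Implicit. Unset Printing Implicit Defensive.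
Import GRing.Theory.
Local Open Scope ring_scope.

Lemma ncoef_cat p q w : ncoef (p ++ q) w = ncoef p w + ncoef q w.
Proof. by rewrite /ncoef big_cat. Qed.
Lemma ncoef_nil w : ncoef [::] w = 0.
Proof. by rewrite /ncoef big_nil. Qed.
Lemma ncoefE p w : ncoef p w = \sum_(m <- p) (if m.2 == w then m.1 else 0).
Proof. by rewrite /ncoef big_mkcond. Qed.
Lemma ncoef_sum ps w : ncoef (nc_sum ps) w = \sum_(p <- ps) ncoef p w.
Proof. by rewrite /ncoef /nc_sum big_flatten. Qed.
Lemma ncoef_scale c p w : ncoef (nc_scale c p) w = c * ncoef p w.
Proof. by rewrite /ncoef /nc_scale big_map mulr_sumr. Qed.
Lemma ncoef_word u w : ncoef (nc_word u) w = if u == w then 1 else 0.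
Proof. by rewrite ncoefE big_seq1. Qed.

Lemma big_ncmul (F : {poly rat} * seq bool -> {poly rat}) p q :
  \sum_(x <- nc_mul p q) F x = \sum_(m <- p) \sum_(m' <- q) F (m.1 * m'.1, m.2 ++ m'.2).
Proof. by rewrite /nc_mul big_flatten big_map; apply eq_bigr => m _; rewrite big_map. Qed.

Lemma ncoef_mul2 p q w : ncoef (nc_mul p q) w =
  \sum_(m <- p) \sum_(m' <- q) (if m.2 ++ m'.2 == w then m.1 * m'.1 else 0).
Proof. by rewrite ncoefE big_ncmul. Qed.

Lemma catE1 (u v w : seq bool) :
  (u ++ v == w) = (u == take (size u) w) && (v == drop (size u) w).
Proof.
apply/eqP/andP => [<-|]; first by rewrite take_size_cat // drop_size_cat.
move: (size u) => j [/eqP Hu /eqP Hv]; by rewrite Hu Hv cat_take_drop.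
Qed.

Lemma catE2 (u v w : seq bool) :
  (u ++ v == w) = (u == take (size w - size v) w) && (v == drop (size w - size v) w).
Proof.
apply/eqP/andP => [<-|]; first by rewrite size_cat addnK take_size_cat // drop_size_cat.
move: (size w - size v)%N => j [/eqP Hu /eqP Hv]; by rewrite Hu Hv cat_take_drop.
Qed.

Lemma ncoef_mulP p q w : ncoef (nc_mul p q) w =
  \sum_(m <- p) (if m.2 == take (size m.2) w then m.1 * ncoef q (drop (size m.2) w) else 0).
Proof.
rewrite ncoef_mul2; apply eq_bigr => m _. case: ifP => H.
  rewrite ncoefE mulr_sumr; apply eq_bigr => m' _; rewrite catE1 H /=.
  by case: ifP => _; rewrite ?mulr0.
by apply big1 => m' _; rewrite catE1 H.
Qed.

Lemma ncoef_mulS p q w : ncoef (nc_mul p q) w =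
  \sum_(m' <- q) (if m'.2 == drop (size w - size m'.2) w
                  then ncoef p (take (size w - size m'.2) w) * m'.1 else 0).
Proof.
rewrite ncoef_mul2 exchange_big; apply eq_bigr => m' _. case: ifP => H.
  rewrite ncoefE mulr_suml; apply eq_bigr => m _; rewrite catE2 H andbT.
  by case: ifP => _; rewrite ?mul0r.
by apply big1 => m _; rewrite catE2 H andbF.
Qed.

Lemma congr_r p q q' w : nc_eq q q' -> ncoef (nc_mul p q) w = ncoef (nc_mul p q') w.
Proof. by move=> H; rewrite !ncoef_mulP; apply eq_bigr => m _; rewrite H. Qed.
Lemma congr_l p p' q w : nc_eq p p' -> ncoef (nc_mul p q) w = ncoef (nc_mul p' q) w.
Proof. by move=> H; rewrite !ncoef_mulS; apply eq_bigr => m _; rewrite H. Qed.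

Lemma ncoef_mul_scaler p c q w :
  ncoef (nc_mul p (nc_scale c q)) w = c * ncoef (nc_mul p q) w.
Proof.
rewrite !ncoef_mulP mulr_sumr; apply eq_bigr => m _.
by case: ifP; rewrite ?mulr0 // ncoef_scale mulrCA.
Qed.
Lemma ncoef_mul_scalel c p q w :
  ncoef (nc_mul (nc_scale c p) q) w = c * ncoef (nc_mul p q) w.
Proof.
rewrite !ncoef_mulP /nc_scale big_map mulr_sumr; apply eq_bigr => m _ /=.
by case: ifP; rewrite ?mulr0 // mulrA.
Qed.
Lemma ncoef_mul_sumr p qs w :
  ncoef (nc_mul p (nc_sum qs)) w = \sum_(q <- qs) ncoef (nc_mul p q) w.
Proof.
rewrite ncoef_mulP.
transitivity (\sum_(m <- p) \sum_(q <- qs)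
  (if m.2 == take (size m.2) w then m.1 * ncoef q (drop (size m.2) w) else 0)).
  apply eq_bigr => m _; case: ifP => _; last by rewrite big1.
  by rewrite ncoef_sum mulr_sumr.
by rewrite exchange_big; apply eq_bigr => q _; rewrite ncoef_mulP.
Qed.
Lemma nc_mul_catl p1 p2 q : nc_mul (p1 ++ p2) q = nc_mul p1 q ++ nc_mul p2 q.
Proof. by rewrite /nc_mul map_cat flatten_cat. Qed.
Lemma nc_mul_nilr p : nc_mul p [::] = [::].
Proof. by rewrite /nc_mul; elim: p. Qed.

Lemma ncoef_mulA p q r w :
  ncoef (nc_mul (nc_mul p q) r) w = ncoef (nc_mul p (nc_mul q r)) w.
Proof.
rewrite !ncoef_mul2 big_ncmul; apply eq_bigr => m _.
rewrite big_ncmul; apply eq_bigr => m' _; apply eq_bigr => m'' _ /=.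
by rewrite catA mulrA.
Qed.

Lemma ncoef_mul_one q w : ncoef (nc_mul nc_one q) w = ncoef q w.
Proof. by rewrite ncoef_mulP big_seq1 /= take0 drop0 mul1r. Qed.

Lemma nc_word_mul u P : nc_mul (nc_word u) P = [seq (m.1, u ++ m.2) | m <- P].
Proof. by rewrite /nc_mul /nc_word /= cats0; apply eq_map => m; rewrite mul1r. Qed.
Lemma sigma_cat u v : nc_eq (sigma_word (u ++ v)) (nc_mul (sigma_word u) (sigma_word v)).
Proof.
elim: u => [|b u IH] w /=; first by rewrite ncoef_mul_one.
by rewrite (congr_r _ _ IH) -ncoef_mulA.
Qed.

Lemma sigma_nseq j : nc_eq (sigma_word (nseq j lx)) (nc_word (nseq j lx)).
Proof.
elim: j => [//|j IH] w /=.
by rewrite (congr_r _ _ IH) nc_word_mul.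
Qed.

Lemma nseq_rc n (x : bool) : nseq n x ++ [:: x] = nseq n.+1 x.
Proof. by elim: n => //= n ->. Qed.

Lemma sigma_zw a : (0 < a)%N ->
  nc_eq (sigma_word (zw a)) (nc_scale 'X (nc_word (nseq a lx)) ++ nc_word (zw a)).
Proof.
case: a => [//|a] _ w.
rewrite /zw /= -cats1 sigma_cat (congr_l _ _ (sigma_nseq a)) nc_word_mul /=.
by rewrite ?cats0 nseq_rc ?mulr1.
Qed.

Lemma S_word_rcons s b : S_word (rcons s b) = nc_mul (sigma_word s) (nc_word [:: b]).
Proof. by rewrite /S_word rev_rcons revK. Qed.

Lemma S_word_cat u v w : v != [::] ->
  ncoef (S_word (u ++ v)) w = ncoef (nc_mul (sigma_word u) (S_word v)) w.
Proof.
case/lastP: v => [//|v b] _.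
by rewrite -rcons_cat !S_word_rcons (congr_l _ _ (sigma_cat u v)) ncoef_mulA.
Qed.

Lemma S_t_coef P w : ncoef (S_t P) w = \sum_(m <- P) m.1 * ncoef (S_word m.2) w.
Proof. by rewrite /S_t ncoef_sum big_map; apply eq_bigr => m _; rewrite ncoef_scale. Qed.

Lemma S_t_cat p q : S_t (p ++ q) = S_t p ++ S_t q.
Proof. by rewrite /S_t map_cat /nc_sum flatten_cat. Qed.

Lemma S_t_mul_word u P w : all (fun m => m.2 != [::]) P ->
  ncoef (S_t (nc_mul (nc_word u) P)) w = ncoef (nc_mul (sigma_word u) (S_t P)) w.
Proof.
move=> /allP HP.
rewrite S_t_coef nc_word_mul big_map /S_t ncoef_mul_sumr big_map.
apply eq_big_seq => m Hm /=.
by rewrite ncoef_mul_scaler S_word_cat // HP.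
Qed.

Lemma S_word_zw m w : ncoef (S_word (zw m)) w = ncoef (nc_word (zw m)) w.
Proof.
by rewrite /zw S_word_rcons (congr_l _ _ (sigma_nseq _)) nc_word_mul /= cats1.
Qed.
Definition Wd (a : nat) (c : seq nat) : seq bool := flatten [seq zw (a * ki) | ki <- c].

Lemma NknE a k n : Nkn a k n = [seq (1, Wd a c) | c <- comps k n].
Proof. by []. Qed.

Lemma comps_nil k n : (k < n)%N -> comps k n = [::].
Proof.
elim: n k => [//|n IH] k Hk /=.
have -> : [seq [seq i :: c | c <- comps (k - i) n] | i <- iota 1 k]
        = [seq [::] | i <- iota 1 k].
  apply eq_in_map => i; rewrite mem_iota => /andP[H1 H2].
  by rewrite IH //; lia.
by elim: (iota 1 k).
Qed.

Lemma comps_size k n c : c \in comps k n -> size c = n.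
Proof.
elim: n k c => [|n IH] k c /=.
  by case: (k == 0%N); rewrite ?inE // => /eqP ->.
move/flattenP => [s /mapP [i _ ->] /mapP [c' Hc' ->]] /=.
by rewrite (IH _ _ Hc').
Qed.

Lemma Nkn_nonempty a k n : all (fun m => m.2 != [::]) (Nkn a k n.+1).
Proof.
apply/allP => m /mapP [c Hc ->] /=.
move: (comps_size Hc); case: c Hc => // j c _ _.
by rewrite /Wd /= -size_eq0 size_cat /zw size_rcons.
Qed.

Lemma zw_add a i : (0 < a)%N -> (0 < i)%N ->
  zw (a * (1 + i)) = nseq a lx ++ zw (a * i).
Proof.
move=> Ha Hi. rewrite /zw -rcons_cat -nseqD; congr (rcons (nseq _ _) _).
rewrite mulnDr muln1; have: (0 < a * i)%N by rewrite muln_gt0 Ha.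
case: (a * i)%N => // x _; lia.
Qed.

Lemma Nkn_rec a k n : (0 < a)%N ->
  Nkn a k.+1 n.+1 = nc_mul (nc_word (zw a)) (Nkn a k n)
                    ++ nc_mul (nc_word (nseq a lx)) (Nkn a k n.+1).
Proof.
move=> Ha.
rewrite !nc_word_mul !NknE -!map_comp.
have E2 : iota 2 k = [seq 1 + i | i <- iota 1 k]%N by rewrite -iotaDl.
rewrite [comps k.+1 n.+1]/= [comps k n.+1]/= E2 /= map_cat; congr (_ ++ _).
  rewrite subSS subn0 -map_comp; apply eq_map => c /=.
  by rewrite /Wd /= muln1.
rewrite map_flatten -map_comp map_flatten -!map_comp.
congr flatten; apply eq_in_map => i; rewrite mem_iota => /andP[Hi _] /=.
rewrite -!map_comp add1n subSS; apply eq_map => c /=.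
by rewrite /Wd /= -add1n zw_add // catA.
Qed.
Lemma alg_step (k n : nat) (fX fZ : nat -> {poly rat}) :
  (forall i, (k < i)%N -> fX i = 0) ->
  'C(k, n.+1)%:R * fZ 0%N = 0 ->
  'X * (\sum_(i < n.+1) 'C(k - i.+1, n.+1 - i.+1)%:R * 'X^(n.+1 - i.+1) * fX i.+1) +
  \sum_(i < n.+1) 'C(k - i.+1, n.+1 - i.+1)%:R * 'X^(n.+1 - i.+1) * fZ i.+1 +
  \sum_(i < n.+2) 'C(k - i.+1, n.+2 - i.+1)%:R * 'X^(n.+2 - i.+1) * fX i.+1 =
  \sum_(i < n.+2) 'C(k.+1 - i.+1, n.+2 - i.+1)%:R * 'X^(n.+2 - i.+1) * (fZ i + fX i.+1).
Proof.
move=> HX HZ.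
under [RHS]eq_bigr do rewrite mulrDr.
rewrite big_split /=.
have R1 : \sum_(i < n.+2) 'C(k.+1 - i.+1, n.+2 - i.+1)%:R * 'X^(n.+2 - i.+1) * fZ i
        = \sum_(i < n.+1) 'C(k - i.+1, n.+1 - i.+1)%:R * 'X^(n.+1 - i.+1) * fZ i.+1.
  rewrite big_ord_recl /= subSS subn0 [X in X + _](_ : _ = 0) ?add0r.
    by apply eq_bigr => i _; rewrite ?lift0 ?subSS.
  by rewrite subSS -mulrA mulrCA HZ mulr0.
have R2 : \sum_(i < n.+2) 'C(k.+1 - i.+1, n.+2 - i.+1)%:R * 'X^(n.+2 - i.+1) * fX i.+1
   = 'X * (\sum_(i < n.+1) 'C(k - i.+1, n.+1 - i.+1)%:R * 'X^(n.+1 - i.+1) * fX i.+1) +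
     \sum_(i < n.+2) 'C(k - i.+1, n.+2 - i.+1)%:R * 'X^(n.+2 - i.+1) * fX i.+1.
  rewrite !(big_ord_recr n.+1) /= subnn !bin0 addrA; congr (_ + _).
  rewrite mulr_sumr -big_split; apply eq_bigr => i _ /=.
  have Hi := ltn_ord i.
  case: (leqP i.+1 k) => Hk; last by rewrite HX // !mulr0 addr0.
  have e1 : (k.+1 - i.+1 = (k - i.+1).+1)%N by lia.
  have e2 : (n.+2 - i.+1 = (n - i).+1)%N by lia.
  have e3 : (n.+1 - i.+1 = n - i)%N by lia.
  by rewrite e1 e2 e3 binS natrD exprS; ring.
rewrite R1 R2; ring.
Qed.
Lemma sum_iota1 (F : nat -> {poly rat}) n :
  \sum_(i <- iota 1 n) F i = \sum_(i < n) F i.+1.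
Proof.
have -> : iota 1 n = [seq 1 + i | i <- iota 0 n]%N by rewrite -iotaDl.
by rewrite big_map -(big_mkord xpredT (fun i => F i.+1)) /index_iota subn0; apply eq_bigr => i _; rewrite add1n.
Qed.

Definition Rp a k n := nc_sum [seq nc_scale ('C(k - i, n - i)%:R * 'X^(n - i)) (Nkn a k i)
                               | i <- iota 1 n].

Lemma ncoef_Rp a k n w : ncoef (Rp a k n) w =
  \sum_(i < n) ('C(k - i.+1, n - i.+1)%:R * 'X^(n - i.+1)) * ncoef (Nkn a k i.+1) w.
Proof.
rewrite /Rp ncoef_sum big_map (sum_iota1 (fun i => ncoef (nc_scale _ _) w)).
by apply eq_bigr => i _; rewrite ncoef_scale.
Qed.

Lemma ncoef_mul_Rp p a k n w : ncoef (nc_mul p (Rp a k n)) w =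
  \sum_(i < n) ('C(k - i.+1, n - i.+1)%:R * 'X^(n - i.+1)) * ncoef (nc_mul p (Nkn a k i.+1)) w.
Proof.
rewrite /Rp ncoef_mul_sumr big_map (sum_iota1 (fun i => ncoef (nc_mul p (nc_scale _ _)) w)).
by apply eq_bigr => i _; rewrite ncoef_mul_scaler.
Qed.

Lemma S_t_fix1 a k : nc_eq (S_t (Nkn a k 1)) (Nkn a k 1).
Proof.
move=> w; rewrite S_t_coef ncoefE; apply eq_big_seq => m /mapP [c Hc ->] /=.
move: (comps_size Hc); case: c Hc => [|j [|]] //= _ _.
by rewrite /Wd /= cats0 S_word_zw ncoef_word mul1r.
Qed.

Lemma main a : (0 < a)%N -> forall k n, (0 < n)%N -> nc_eq (S_t (Nkn a k n)) (Rp a k n).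
Proof.
move=> Ha; elim=> [|k IH] n Hn w.
  rewrite NknE comps_nil // ncoef_Rp /= /S_t /= ncoef_nil big1 // => i _.
  by rewrite mulr0.
case: n Hn => [//|[|n]] _.
  by rewrite S_t_fix1 ncoef_Rp big_ord1 /= subnn bin0 expr0 !mul1r.
rewrite Nkn_rec // S_t_cat ncoef_cat !S_t_mul_word ?Nkn_nonempty //.
rewrite (congr_l _ _ (sigma_zw Ha)) (congr_l _ _ (sigma_nseq a)) nc_mul_catl ncoef_cat.
rewrite ncoef_mul_scalel.
rewrite (congr_r _ _ (IH n.+1 (ltn0Sn n))) (congr_r (nc_word (zw a)) _ (IH n.+1 (ltn0Sn n))) (congr_r _ _ (IH n.+2 (ltn0Sn _))).
rewrite !ncoef_mul_Rp ncoef_Rp.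
have NR : forall i : nat, ncoef (Nkn a k.+1 i.+1) w =
   ncoef (nc_mul (nc_word (zw a)) (Nkn a k i)) w + ncoef (nc_mul (nc_word (nseq a lx)) (Nkn a k i.+1)) w.
  by move=> i; rewrite Nkn_rec // ncoef_cat.
under [RHS]eq_bigr => i _ do rewrite NR.
apply: (@alg_step k n (fun i => ncoef (nc_mul (nc_word (nseq a lx)) (Nkn a k i)) w)
                 (fun i => ncoef (nc_mul (nc_word (zw a)) (Nkn a k i)) w)).
  by move=> i Hi; rewrite NknE comps_nil //= nc_mul_nilr ncoef_nil.
case: (k) => [|k'] /=; first by rewrite bin0n mul0r.
by rewrite nc_mul_nilr ncoef_nil mulr0.
Qed.

Unset Implicit Arguments.

Theorem proposition4p10 (a k n : nat) :
  (0 < a)%N -> (0 < n)%N -> (n <= k)%N ->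
  nc_eq (S_t (Nkn a k n))
        (nc_sum [seq nc_scale (('C(k - i, k - n))%:R * 'X^(n - i)) (Nkn a k i)
                | i <- iota 1 n]).
Proof.
move=> Ha Hn Hnk w.
rewrite (main Ha k Hn w) /Rp.
congr (ncoef (nc_sum _) w); apply eq_in_map => i; rewrite mem_iota => /andP [H1 H2].
have -> : (k - n = (k - i) - (n - i))%N by lia.
rewrite bin_sub //; lia.
Qed.
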